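(* In the setting of the lemma on the linear representation of the forward difference (i.e. $\alpha,\beta>0$, $g(n)=\sum_{i=0}^kc_in^i$ with $c_k\ne0$, and $A_0,A_1\in\mathbb{C}^{(k+2)\times(k+2)}$ the upper triangular matrices defined there), assume $k\ge1$ and let $C=A_0+A_1$. Then the joint spectral radius of $\{A_0,A_1\}$ equals $\max\{\alpha,\beta,2^{k-1}\}$, and the set of eigenvalues of $C$ is $\{\alpha+\beta,2^k,2^{k-1},\dots,2,1\}$. If $\max\{\alpha,\beta\}\ne2^{k-1}$, then $\{A_0,A_1\}$ has the simple growth property.
   Context: Here, with $d_0=(1-\beta)x(1)-g(1)+g(0)$, $d_1=g(1)-(1-\beta)x(1)$, $b_{0j}=\sum_{i=j+1}^k\binom ij2^jc_i$, $b_{1j}=\sum_{i=j+1}^k\binom ij(2^i-2^j)c_i$, $a_{0ij}=[j=i]2^i$, $a_{1ij}=\binom ij2^j$ ($0\le i,j<k$), $b_r=(b_{r(k-1)},\dots,b_{r0})$, $\widetilde A_r=(a_{rij})_{i,j=k-1,\dots,0}$, $\mu_0=\beta$, $\mu_1=\alpha$, one has $A_r=\begin{pmatrix}\mu_r&b_r&d_r\\0&\widetilde A_r&0\\0&0&[r=0]\end{pmatrix}$ for $r\in\{0,1\}$. Joint spectral radius of a finite set $G$ of square matrices: $\rho(G)=\lim_{k\to\infty}\sup\{\|G_1\cdots G_k\|^{1/k}:G_i\in G\}$ for an induced norm. $G$ has the simple growth property if $\|G_1\cdots G_k\|=O(\rho(G)^k)$ uniformly for $G_i\in G$ as $k\to\infty$.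 $[S]$ is the Iverson bracket. *)

(* Defs.v *)
From HB Require Import structures.
From mathcomp Require Import all_boot all_order all_algebra.
From mathcomp Require Import complex.
From mathcomp Require Import all_classical all_reals all_analysis.
Set Implicit Arguments. Unset Strict Implicit. Unset Printing Implicit Defensive.
Import Order.TTheory GRing.Theory Num.Theory.
Import numFieldNormedType.Exports.
Local Open Scope ring_scope.
Local Open Scope classical_set_scope.

Definition cabs (R : realType) (z : R[i]) : R := ComplexField.Normc.normc z.

Definition gpoly (R : realType) (k : nat) (c : nat -> R[i]) (n : nat) : R[i] :=
  \sum_(i < k.+1) c i * (n%:R) ^+ i.

Definition bcoef (R : realType) (k : nat) (c : nat -> R[i]) (r : bool) (j : nat)
  : R[i] :=
  \sum_(j.+1 <= i < k.+1)
     ('C(i, j)%:R * (if r then (2 ^ i - 2 ^ j)%:R else (2 ^ j)%:R) * c i).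

Definition acoef (R : realType) (r : bool) (i j : nat) : R[i] :=
  if r then ('C(i, j) * 2 ^ j)%:R else (if j == i then (2 ^ i)%:R else 0).

(* d_0 and d_1, with x1 = x(1) *)
Definition dcoef (R : realType) (k : nat) (c : nat -> R[i]) (beta : R)
  (x1 : R[i]) (r : bool) : R[i] :=
  if r then gpoly k c 1 - (1 - (beta%:C)%C) * x1
  else (1 - (beta%:C)%C) * x1 - gpoly k c 1 + gpoly k c 0.

(* The (k+2)x(k+2) matrix A_r (r = false <-> r = 0, r = true <-> r = 1).
   Row/column index p : 'I_(k+2):  p = 0 is the first row/column (mu_r, b_r, d_r),
   p = 1..k correspond to i = k - p (i.e. i = k-1, ..., 0, descending order as in
   the paper), and p = k+1 is the last row/column. *)
Definition Amat (R : realType) (k : nat) (c : nat -> R[i]) (alpha beta : R)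
  (x1 : R[i]) (r : bool) : 'M[R[i]]_(k.+2) :=
  \matrix_(p, q)
    (if p == 0 :> nat then
       (if q == 0 :> nat then (if r then (alpha%:C)%C else (beta%:C)%C)
        else if q == k.+1 :> nat then dcoef k c beta x1 r
        else bcoef k c r (k - q))
     else if p == k.+1 :> nat then
       (if (q == k.+1 :> nat) && ~~ r then 1 else 0)
     else
       (if (q == 0 :> nat) || (q == k.+1 :> nat) then 0
        else acoef R r (k - p) (k - q))).

(* Induced matrix norm: the operator norm induced by the max-norm on C^n
   (maximal absolute row sum). *)
Definition mxnorm (R : realType) (n : nat) (M : 'M[R[i]]_n) : R :=
  \big[Num.max/0]_(p < n) \sum_(q < n) cabs (M p q).

Definition wordprod (R : realType) (n : nat) (G : bool -> 'M[R[i]]_n.+1)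
  (m : nat) (w : {ffun 'I_m -> bool}) : 'M[R[i]]_n.+1 :=
  \prod_(l < m) G (w l).

Definition supnorm (R : realType) (n : nat) (G : bool -> 'M[R[i]]_n.+1)
  (m : nat) : R :=
  \big[Num.max/0]_(w : {ffun 'I_m -> bool}) mxnorm (wordprod G w).

Definition jsr_is (R : realType) (n : nat) (G : bool -> 'M[R[i]]_n.+1) (rho : R)
  : Prop :=
  (fun m : nat => supnorm G m `^ (m%:R)^-1) @ \oo --> rho.

Definition simple_growth (R : realType) (n : nat) (G : bool -> 'M[R[i]]_n.+1)
  (rho : R) : Prop :=
  exists M : R, forall (m : nat) (w : {ffun 'I_m -> bool}),
    mxnorm (wordprod G w) <= M * rho ^+ m.

(* Main.v *)
Require Import Defs.
From HB Require Import structures.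
From mathcomp Require Import all_boot all_order all_algebra.
From mathcomp Require Import complex.
From mathcomp Require Import all_classical all_reals all_analysis.
From mathcomp Require Import ring lra zify.
Import Order.TTheory GRing.Theory Num.Theory.
Local Open Scope ring_scope.
Set Implicit Arguments. Unset Strict Implicit.

Lemma cabs_ge0 (R : realType) (z : R[i]) : 0 <= cabs z.
Proof. by case: z => a b; rewrite /cabs /=; exact: sqrtr_ge0. Qed.

Lemma cabsM (R : realType) (x y : R[i]) : cabs (x * y) = cabs x * cabs y.
Proof. exact: ComplexField.Normc.normcM. Qed.

Lemma cabsD (R : realType) (x y : R[i]) : cabs (x + y) <= cabs x + cabs y.
Proof. exact: (@le_normcD R x y). Qed.

Lemma cabs0 (R : realType) : cabs (0 : R[i]) = 0.
Proof. exact: ComplexField.Normc.normc0. Qed.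

Lemma cabs_real (R : realType) (r : R) : cabs ((r%:C)%C) = `|r|.
Proof. by rewrite /cabs /= expr0n /= addr0 sqrtr_sqr. Qed.

Lemma cabs_nat (R : realType) (n : nat) : cabs (n%:R : R[i]) = n%:R.
Proof.
have -> : (n%:R : R[i]) = ((n%:R : R)%:C)%C by rewrite rmorph_nat.
by rewrite cabs_real ger0_norm.
Qed.

Lemma cabs_sum (R : realType) (I : finType) (P : pred I) (F : I -> R[i]) :
  cabs (\sum_(i | P i) F i) <= \sum_(i | P i) cabs (F i).
Proof.
elim/big_ind2: _ => //; first by rewrite cabs0.
move=> x1 x2 y1 y2 h1 h2; exact: (le_trans (cabsD x2 y2) (lerD h1 h2)).
Qed.

Lemma cabs_prod (R : realType) (I : finType) (F : I -> R[i]) :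
  cabs (\prod_i F i) = \prod_i cabs (F i).
Proof.
elim/big_rec2: _ => //; first exact: ComplexField.Normc.normc1.
by move=> i y1 y2 _ <-; rewrite cabsM.
Qed.

Definition ut (R : realType) (n : nat) (M : 'M[R[i]]_n.+1) :=
  forall p q : 'I_n.+1, (q < p)%N -> M p q = 0.

Lemma mulE (R : realType) (n : nat) (M N : 'M[R[i]]_n.+1) p q :
  (M * N) p q = \sum_s M p s * N s q.
Proof. by rewrite -mulmxE mxE. Qed.

Lemma prod_ut (R : realType) (n : nat) (m : nat) (F : 'I_m -> 'M[R[i]]_n.+1) :
  (forall l, ut (F l)) ->
  ut (\prod_(l < m) F l) /\ forall p, (\prod_(l < m) F l) p p = \prod_(l < m) F l p p.
Proof.
elim: m F => [|m IH] F hF.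
  rewrite !big_ord0; split; last by move=> p; rewrite big_ord0 mxE eqxx.
  by move=> p q qp; rewrite mxE; case: eqP => // e; move: qp; rewrite e ltnn.
have [ut1 d1] := IH (fun l => F (lift ord0 l)) (fun l => hF _).
rewrite !big_ord_recl; split.
  move=> p q qp; rewrite mulE big1 // => s _.
  case: (ltnP s p) => sp; first by rewrite (hF _ _ _ sp) mul0r.
  by rewrite (ut1 _ _ (leq_trans qp sp)) mulr0.
move=> p; rewrite [RHS]big_ord_recl -d1 mulE (bigD1 p) //=.
rewrite [X in _ + X]big1 ?addr0 // => s sp.
case: (ltnP s p) => sp'; first by rewrite (hF _ _ _ sp') mul0r.
have : (p < s)%N by rewrite ltn_neqAle sp' andbT eq_sym.
by move=> ps; rewrite (ut1 _ _ ps) mulr0.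
Qed.

Lemma sum_entry_mul (R : realType) n (M N : 'M[R[i]]_n.+1) (w : 'I_n.+1 -> R) p :
  (forall q, 0 <= w q) ->
  \sum_q cabs ((M * N) p q) * w q <= \sum_s cabs (M p s) * (\sum_q cabs (N s q) * w q).
Proof.
move=> w0.
apply: (@le_trans _ _ (\sum_q \sum_s cabs (M p s) * cabs (N s q) * w q)).
  apply: ler_sum => q _; rewrite -mulr_suml ler_wpM2r //.
  rewrite mulE; apply: le_trans (cabs_sum _ _) _.
  by apply: ler_sum => s _; rewrite cabsM.
rewrite exchange_big /=; apply: ler_sum => s _; rewrite mulr_sumr.
by apply: ler_sum => q _; rewrite mulrA.
Qed.

Lemma GL (R : realType) n (A : bool -> 'M[R[i]]_n.+1) (H : pred 'I_n.+1)
  (w : 'I_n.+1 -> R) (lam th beta : R) :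
  (forall p, 0 <= w p) -> 0 <= th -> th < lam -> 0 <= beta ->
  (forall r p, ~~ H p -> (\sum_q cabs (A r p q) * w q <= th * w p)
                         /\ (forall q, H q -> A r p q = 0)) ->
  (forall r p, H p -> (\sum_(q | H q) cabs (A r p q) * w q <= lam * w p)
                 /\ (\sum_(q | ~~ H q) cabs (A r p q) * w q <= beta * w p)) ->
  forall m (f : 'I_m -> bool) p,
  \sum_q cabs ((\prod_(l < m) A (f l)) p q) * w q <=
   (if H p then (beta / (lam - th) + 1) * lam ^+ m - beta / (lam - th) * th ^+ m
    else th ^+ m) * w p.
Proof.
move=> w0 th0 thl b0 hL hH.
set D := beta / (lam - th).
have lt0 : 0 < lam - th by rewrite subr_gt0.
have D0 : 0 <= D by rewrite divr_ge0 // ltW.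
have DE : D * (lam - th) = beta by rewrite /D divfK // gt_eqF.
have l0 : 0 <= lam by rewrite (le_trans th0) // ltW.
have Cpos : forall m, 0 <= (D + 1) * lam ^+ m - D * th ^+ m.
  move=> m; rewrite subr_ge0 mulrDl mul1r.
  apply: (@le_trans _ _ (D * lam ^+ m)).
    by apply: ler_wpM2l => //; apply: lerXn2r => //; rewrite ?nnegrE // ltW.
  by rewrite lerDl exprn_ge0.
elim=> [|m IH] f p.
  rewrite big_ord0 (bigD1 p) //= mxE eqxx big1 ?addr0; last first.
    by move=> q qp; rewrite mxE eq_sym (negbTE qp) cabs0 mul0r.
  rewrite cabs_nat mul1r; case: (H p); last by rewrite expr0 mul1r.
  by rewrite !expr0 !mulr1 addrAC subrr add0r mul1r.
rewrite big_ord_recl.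
apply: le_trans; first exact: sum_entry_mul.
set r := f ord0.
have IH' := IH (fun i => f (lift ord0 i)).
case hp: (H p).
- rewrite (bigID H) /=.
  apply: (@le_trans _ _ (((D + 1) * lam ^+ m - D * th ^+ m) * (lam * w p) + th ^+ m * (beta * w p))).
    apply: lerD.
      apply: (@le_trans _ _ (\sum_(i | H i) cabs (A r p i) * w i * ((D + 1) * lam ^+ m - D * th ^+ m))).
        apply: ler_sum => s hs; rewrite -mulrA ler_wpM2l ?cabs_ge0 //.
        by apply: le_trans (IH' s) _; rewrite hs mulrC.
      by rewrite -mulr_suml mulrC ler_wpM2l // (proj1 (hH r p hp)).
    apply: (@le_trans _ _ (\sum_(i | ~~ H i) cabs (A r p i) * w i * th ^+ m)).
      apply: ler_sum => s hs; rewrite -mulrA ler_wpM2l ?cabs_ge0 //.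
      by apply: le_trans (IH' s) _; rewrite (negbTE hs) mulrC.
    by rewrite -mulr_suml mulrC ler_wpM2l ?exprn_ge0 // (proj2 (hH r p hp)).
  rewrite -DE !exprS le_eqVlt; apply/orP; left; apply/eqP; ring.
- apply: (@le_trans _ _ (\sum_i cabs (A r p i) * w i * th ^+ m)).
    apply: ler_sum => s _.
    case hs: (H s); first by rewrite (proj2 (hL r p (negbT hp)) s hs) cabs0 !mul0r.
    rewrite -mulrA ler_wpM2l ?cabs_ge0 //.
    by apply: le_trans (IH' s) _; rewrite hs mulrC.
  have h := proj1 (hL r p (negbT hp)); have t0 := exprn_ge0 m th0.
  rewrite -mulr_suml exprS; nra.
Qed.

Lemma le_sum1 (R : realType) (I : finType) (F : I -> R) j :
  (forall i, 0 <= F i) -> F j <= \sum_i F i.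
Proof. by move=> h; rewrite (bigD1 j) //= lerDl sumr_ge0. Qed.

Lemma sum_cond_le (R : realType) (I : finType) (P : pred I) (F : I -> R) :
  (forall i, 0 <= F i) -> \sum_(i | P i) F i <= \sum_i F i.
Proof.
move=> h; rewrite [X in _ <= X](bigID P) /= lerDl sumr_ge0 //.
Qed.

Lemma growth (R : realType) n (A : bool -> 'M[R[i]]_n.+1) (H : pred 'I_n.+1)
  (lam th dH dL : R) :
  (forall r, ut (A r)) -> 0 <= th -> th < lam -> 0 < dH -> 0 < dL ->
  (forall r p, ~~ H p -> cabs (A r p p) + dL <= th /\ (forall q, H q -> A r p q = 0)) ->
  (forall r p, H p -> cabs (A r p p) + dH <= lam \/
       (cabs (A r p p) <= lam /\ forall q : 'I_n.+1, (p < q)%N -> H q -> A r p q = 0)) ->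
  exists K, forall m (f : {ffun 'I_m -> bool}), mxnorm (wordprod A f) <= K * lam ^+ m.
Proof.
move=> hut th0 thl dH0 dL0 hL hH.
set S := \sum_r \sum_(p : 'I_n.+1) \sum_(q : 'I_n.+1) cabs (A r p q).
have S0 : 0 <= S by do 3!(apply: sumr_ge0 => ? _); exact: cabs_ge0.
have eS : forall r p q, cabs (A r p q) <= S.
  move=> r p q.
  have e1 : cabs (A r p q) <= \sum_(q' : 'I_n.+1) cabs (A r p q').
    by apply: (@le_sum1 _ _ (fun q' => cabs (A r p q'))) => q'; exact: cabs_ge0.
  have e2 : \sum_(q' : 'I_n.+1) cabs (A r p q') <= \sum_(p' : 'I_n.+1) \sum_(q' : 'I_n.+1) cabs (A r p' q').
    apply: (@le_sum1 _ _ (fun p' => \sum_(q' : 'I_n.+1) cabs (A r p' q'))) => p'.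
    by apply: sumr_ge0 => ? _; exact: cabs_ge0.
  apply: le_trans (le_trans e1 e2) _.
  apply: (@le_sum1 _ _ (fun r => \sum_(p' : 'I_n.+1) \sum_(q' : 'I_n.+1) cabs (A r p' q'))) => r'.
  by do 2!(apply: sumr_ge0 => ? _); exact: cabs_ge0.
set d := Num.min dH dL.
have d0 : 0 < d by rewrite lt_min dH0 dL0.
have ddH : d <= dH by rewrite ge_min lexx.
have ddL : d <= dL by rewrite ge_min lexx orbT.
set Kw := (n.+1)%:R * S / d + 1.
have Kw1 : 1 <= Kw by rewrite lerDr divr_ge0 ?mulr_ge0 // ltW.
have Kw0 : 0 < Kw by apply: lt_le_trans Kw1.
set w := fun p : 'I_n.+1 => Kw ^+ (n - p).
have w1 : forall p, 1 <= w p by move=> p; exact: exprn_ege1.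
have w0 : forall p, 0 <= w p by move=> p; apply: le_trans (w1 p).
have wn : forall p, w p <= Kw ^+ n by move=> p; apply: ler_weXn2l => //; exact: leq_subr.
have offd : forall r p q, q != p -> cabs (A r p q) * w q <= S / Kw * w p.
  move=> r p q qp; case: (ltnP q p) => hq.
    by rewrite hut // cabs0 mul0r mulr_ge0 // divr_ge0 // ltW.
  have pq : (p < q)%N by rewrite ltn_neqAle hq andbT eq_sym.
  rewrite -(ler_pM2r Kw0) [S / Kw * _ * _]mulrAC divfK ?gt_eqF // -mulrA.
  apply: ler_pM => //; first exact: cabs_ge0.
    by rewrite mulr_ge0 // ltW.
  rewrite /w -exprSr; apply: ler_weXn2l => //.
  have := ltn_ord q; have := ltn_ord p; lia.
have offsum : forall r p, \sum_(q | q != p) cabs (A r p q) * w q <= d * w p.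
  move=> r p; apply: le_trans (ler_sum _ (fun q qp => offd r p q qp)) _.
  apply: le_trans; first by apply: sum_cond_le => q; rewrite mulr_ge0 // ?divr_ge0 // ltW.
  rewrite sumr_const card_ord -mulr_natl mulrA ler_wpM2r //.
  rewrite mulrA ler_pdivrMr // /Kw mulrDr mulr1 mulrCA divff ?gt_eqF // mulr1.
  by rewrite mulrC lerDl ltW.
have rowsum : forall r p, \sum_q cabs (A r p q) * w q <= (cabs (A r p p) + d) * w p.
  by move=> r p; rewrite (bigD1 p) //= mulrDl lerD2l.
set beta := (S * Kw ^+ n) *+ n.+1.
have b0 : 0 <= beta by rewrite mulrn_wge0 // mulr_ge0 // exprn_ge0 // ltW.
refine ((fun hb => _) (@GL R n A H w lam th beta w0 th0 thl b0 _ _)); last 2 first.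
- move=> r p hp; split; last exact: (proj2 (hL r p hp)).
  apply: le_trans (rowsum r p) _; rewrite ler_wpM2r //.
  by apply: le_trans (proj1 (hL r p hp)); rewrite lerD2l.
- move=> r p hp; split.
    case: (hH r p hp) => [h|[h hz]].
      apply: le_trans; first by apply: sum_cond_le => q; rewrite mulr_ge0 ?cabs_ge0.
      apply: le_trans (rowsum r p) _; rewrite ler_wpM2r //.
      by apply: le_trans h; rewrite lerD2l.
    rewrite (bigD1 p) //= big1 ?addr0; first by rewrite ler_wpM2r.
    move=> q /andP[hq qp]; case: (ltnP q p) => hq'.
      by rewrite hut // cabs0 mul0r.
    have pq : (p < q)%N by rewrite ltn_neqAle hq' andbT eq_sym.
    by rewrite hz // cabs0 mul0r.
  apply: le_trans; first by apply: sum_cond_le => q; rewrite mulr_ge0 ?cabs_ge0.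
  apply: (@le_trans _ _ beta); last by rewrite ler_peMr.
  apply: (@le_trans _ _ (\sum_(q : 'I_n.+1) S * Kw ^+ n)); last by rewrite sumr_const card_ord.
  apply: ler_sum => q _.
  by apply: ler_pM => //; exact: cabs_ge0.
set D := beta / (lam - th).
have D0 : 0 <= D by rewrite divr_ge0 // subr_ge0 ltW.
have l0 : 0 <= lam by rewrite (le_trans th0) // ltW.
exists ((D + 1) * Kw ^+ n) => m f.
apply: bigmax_le => [|p _]; first by rewrite !mulr_ge0 ?addr_ge0 ?exprn_ge0 // ltW.
apply: (@le_trans _ _ (\sum_q cabs (wordprod A f p q) * w q)).
  by apply: ler_sum => q _; rewrite ler_peMr ?cabs_ge0.
apply: le_trans (hb m f p) _.
have hw := wn p; have hw0 := w0 p.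
have lm0 : 0 <= lam ^+ m := exprn_ge0 m l0.
have tm0 : 0 <= th ^+ m := exprn_ge0 m th0.
have tl : th ^+ m <= lam ^+ m by apply: lerXn2r => //; rewrite ?nnegrE // ltW.
have hc0 : 0 <= (if H p then (D + 1) * lam ^+ m - D * th ^+ m else th ^+ m).
  case: (H p) => //; rewrite subr_ge0; nra.
have hc : (if H p then (D + 1) * lam ^+ m - D * th ^+ m else th ^+ m) <= (D + 1) * lam ^+ m.
  case: (H p); nra.
apply: le_trans (ler_pM hc0 hw0 hc hw) _.
by rewrite mulrAC.
Qed.

Lemma A_ut (R : realType) k c (alpha beta : R) x1 r : ut (Amat k c alpha beta x1 r).
Proof.
move=> p q qp; rewrite mxE.
case: eqP => [p0|/eqP p0]; first by move: qp; rewrite p0.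
case: eqP => [pk|/eqP pk].
  by rewrite (_ : (q == k.+1 :> nat) = false) //; apply/negbTE; move: qp; rewrite pk; lia.
case: ifP => // /norP[q0 qk].
rewrite /acoef; case: r.
  rewrite bin_small ?mul0n //.
  have := ltn_ord p; have := ltn_ord q; move: q0 qk p0 pk qp; lia.
case: eqP => // e; move: qp e.
have := ltn_ord p; have := ltn_ord q; move: q0 qk p0 pk; lia.
Qed.

Lemma A_diag (R : realType) k c (alpha beta : R) x1 r (p : 'I_k.+2) :
  Amat k c alpha beta x1 r p p =
  if (p == 0 :> nat) then (if r then alpha%:C else beta%:C)%C
  else if (p == k.+1 :> nat) then (~~ r)%:R else (2 ^ (k - p))%:R.
Proof.
rewrite mxE; case p0: (p == 0 :> nat) => //=.
case pk: (p == k.+1 :> nat) => /=; first by case: r.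
rewrite /acoef; case: r; last by rewrite eqxx.
by rewrite binn mul1n.
Qed.

Lemma A_midlast (R : realType) k c (alpha beta : R) x1 r (p q : 'I_k.+2) :
  (p != 0 :> nat) -> (p != k.+1 :> nat) -> (q == k.+1 :> nat) ->
  Amat k c alpha beta x1 r p q = 0.
Proof.
by move=> /negbTE p0 /negbTE pk qk; rewrite mxE p0 pk qk orbT.
Qed.

Lemma cabs_diag0 (R : realType) k c (alpha beta : R) x1 r (p : 'I_k.+2) :
  0 < alpha -> 0 < beta -> (p == 0 :> nat) ->
  cabs (Amat k c alpha beta x1 r p p) = if r then alpha else beta.
Proof.
move=> a0 b0 p0; rewrite A_diag p0; case: r; rewrite cabs_real gtr0_norm //.
Qed.

Lemma cabs_diag0_le (R : realType) k c (alpha beta : R) x1 r (p : 'I_k.+2) :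
  0 < alpha -> 0 < beta -> (p == 0 :> nat) ->
  cabs (Amat k c alpha beta x1 r p p) <= Num.max alpha beta.
Proof.
move=> a0 b0 p0; rewrite cabs_diag0 //; case: r; by rewrite ?le_max lexx ?orbT.
Qed.

Lemma cabs_diag_mid (R : realType) k c (alpha beta : R) x1 r (p : 'I_k.+2) :
  (p != 0 :> nat) -> (p != k.+1 :> nat) ->
  cabs (Amat k c alpha beta x1 r p p) = 2 ^+ (k - p).
Proof.
move=> /negbTE p0 /negbTE pk; rewrite A_diag p0 pk cabs_nat natrX //.
Qed.

Lemma cabs_diag_le (R : realType) k c (alpha beta : R) x1 r (p : 'I_k.+2) (j : nat) :
  (1 <= j <= p)%N -> (j <= k)%N ->
  cabs (Amat k c alpha beta x1 r p p) <= 2 ^+ (k - j).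
Proof.
move=> /andP[j1 jp] jk.
have p0 : (p != 0 :> nat) by move: j1 jp; lia.
have [pk|pk] := eqVneq (p : nat) k.+1.
  rewrite A_diag (negbTE p0) pk eqxx cabs_nat.
  apply: le_trans (exprn_ege1 _ _); last by rewrite (ler_nat _ 1 2).
  by case: r.
rewrite cabs_diag_mid //; apply: ler_weXn2l; first by rewrite (ler_nat _ 1 2).
move: jp; lia.
Qed.
Section P5.
Import numFieldNormedType.Exports.
Local Open Scope classical_set_scope.

Lemma bernoulli (R : realType) (x : R) m : 0 <= x -> 1 + m%:R * x <= (1 + x) ^+ m.
Proof.
move=> x0; elim: m => [|m IH]; first by rewrite mul0r addr0 expr0.
rewrite exprS -natr1 mulrDl mul1r.
have h : 0 <= m%:R * x by rewrite mulr_ge0.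
nra.
Qed.

Lemma powR_root (R : realType) (x : R) m : 0 <= x -> (0 < m)%N ->
  (x ^+ m) `^ (m%:R)^-1 = x.
Proof.
move=> x0 m0; rewrite -powR_mulrn // -powRrM mulfV ?powRr1 //.
by rewrite pnatr_eq0 -lt0n.
Qed.

Lemma root_cvg (R : realType) (s : nat -> R) (rho : R) : 0 < rho ->
  (forall m, rho ^+ m <= s m) ->
  (forall e, 0 < e -> exists K, forall m, s m <= K * (rho + e) ^+ m) ->
  (fun m => s m `^ (m%:R)^-1) @ \oo --> rho.
Proof.
move=> r0 hlo hup; apply/cvgrPdist_le => eps eps0.
have e20 : 0 < eps / 2 by rewrite divr_gt0.
have [K hK] := hup _ e20.
set q := (rho + eps) / (rho + eps / 2).
have d0 : 0 < rho + eps / 2 by rewrite addr_gt0.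
have q1 : 0 < q - 1.
  rewrite subr_gt0 /q ltr_pdivlMr // mul1r; lra.
near=> m.
have hm : K / (q - 1) <= m%:R by near: m; exact: nbhs_infty_ger.
have m0 : (0 < m)%N by near: m; exact: (nbhs_infty_gt 0).
have hq : K <= q ^+ m.
  have := bernoulli m (ltW q1); rewrite addrCA subrr addr0 => hb.
  apply: le_trans hb; rewrite ler_pdivrMr // in hm.
  nra.
have slo := hlo m.
have rm0 : 0 <= rho ^+ m by rewrite exprn_ge0 // ltW.
have s0 : 0 <= s m by apply: le_trans slo.
have sup : s m <= (rho + eps) ^+ m.
  apply: le_trans (hK m) _.
  have -> : rho + eps = q * (rho + eps / 2) by rewrite /q divfK // gt_eqF.
  by rewrite exprMn ler_wpM2r // exprn_ge0 // ltW.
have i0 : 0 <= (m%:R : R)^-1 by rewrite invr_ge0.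
have L : rho <= s m `^ (m%:R)^-1.
  rewrite -{1}(powR_root (ltW r0) m0); apply: ge0_ler_powR => //.
have U : s m `^ (m%:R)^-1 <= rho + eps.
  rewrite -(@powR_root _ (rho + eps) m) //; last by rewrite addr_ge0 // ltW.
  apply: ge0_ler_powR => //; rewrite nnegrE ?exprn_ge0 //.
  by rewrite addr_ge0 // ltW.
rewrite ler_norml; apply/andP; split; lra.
Unshelve. all: by end_near.
Qed.

End P5.

Lemma mxnorm_ge (R : realType) n (M : 'M[R[i]]_n.+1) p : cabs (M p p) <= mxnorm M.
Proof.
apply: le_trans (le_bigmax _ (fun p => \sum_q cabs (M p q)) p).
by apply: (@le_sum1 _ _ (fun q => cabs (M p q))) => q; exact: cabs_ge0.
Qed.

Lemma mxnorm_ge0 (R : realType) n (M : 'M[R[i]]_n.+1) : 0 <= mxnorm M.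
Proof. exact: le_trans (cabs_ge0 _) (mxnorm_ge M ord0). Qed.

Lemma supnorm_ge (R : realType) n (G : bool -> 'M[R[i]]_n.+1) m (f : {ffun 'I_m -> bool}) :
  mxnorm (wordprod G f) <= supnorm G m.
Proof. exact: (le_bigmax _ (fun f => mxnorm (wordprod G f)) f). Qed.

Lemma supnorm_le (R : realType) n (G : bool -> 'M[R[i]]_n.+1) m (B : R) :
  (forall f : {ffun 'I_m -> bool}, mxnorm (wordprod G f) <= B) -> supnorm G m <= B.
Proof.
move=> h; apply: bigmax_le => // .
exact: le_trans (mxnorm_ge0 _) (h [ffun => true]).
Qed.

Lemma supnorm_diag (R : realType) n (G : bool -> 'M[R[i]]_n.+1) m (f : {ffun 'I_m -> bool}) p :
  (forall r, ut (G r)) -> \prod_(l < m) cabs (G (f l) p p) <= supnorm G m.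
Proof.
move=> hut; apply: le_trans (supnorm_ge G f).
apply: le_trans (mxnorm_ge _ p); rewrite /wordprod.
have [_ ->] := @prod_ut _ _ _ (fun l => G (f l)) (fun l => hut _).
by rewrite cabs_prod.
Qed.

Lemma max_pow_le (R : realType) (a b S : R) m :
  a ^+ m <= S -> b ^+ m <= S -> (Num.max a b) ^+ m <= S.
Proof. by rewrite /Num.max; case: ifP. Qed.

Lemma trig_aux (R : realType) n (M N : 'M[R[i]]_n.+1) (z : R[i]) :
  ut M -> ut N -> is_trig_mx (z%:M - (M + N))^T.
Proof.
move=> hM hN; apply/is_trig_mxP => i j ij; rewrite !mxE.
rewrite (hM j i ij) (hN j i ij) addr0 subr0.
by rewrite (_ : (j == i) = false) //; apply/negbTE; move: ij; rewrite neq_ltn => ->; rewrite orbT.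
Qed.

Lemma diag_aux (R : realType) n (M N : 'M[R[i]]_n.+1) (z : R[i]) p :
  ((z%:M - (M + N))^T) p p = z - (M p p + N p p).
Proof. by rewrite !mxE eqxx mulr1n. Qed.

Lemma add_aux (R : realType) n (M N : 'M[R[i]]_n.+1) p :
  (M + N) p p = M p p + N p p.
Proof. by rewrite mxE. Qed.
Lemma nf1 k : (1 <= k)%N -> (1 != k.+1)%N. Proof. lia. Qed.
Lemma nf2 k p : (0 < p)%N -> (0 < k)%N -> ((k - p).+1 <= k)%N. Proof. lia. Qed.
Lemma nf3 k j : (k - j < k.+2)%N. Proof. lia. Qed.
Lemma nf4 k j : (j.+1 <= k)%N -> (k - j == 0)%N = false. Proof. move=> h; apply/eqP; lia. Qed.
Lemma nf5 k j : (k - j == k.+1)%N = false. Proof. apply/eqP; lia. Qed.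
Lemma nf6 k j : (j.+1 <= k)%N -> (k - (k - j)).+1 = j.+1. Proof. lia. Qed.
Lemma nf7 k : (1 < k)%N -> k.-1 = (k - 2).+1. Proof. lia. Qed.
Lemma nf8 p : ~~ (p <= 1)%N -> (1 <= 2 <= p)%N. Proof. lia. Qed.
Lemma nf9 p q : ~~ (p <= 1)%N -> (q <= 1)%N -> (q < p)%N. Proof. lia. Qed.
Lemma nf10 p q : (p == 0)%N = false -> (p <= 1)%N -> (p < q)%N -> (q <= 1)%N -> False. Proof. lia. Qed.
Lemma nf11 k : (1 <= k)%N -> (k <= 1)%N -> k = 1%N. Proof. lia. Qed.
Lemma nf12 k p q : (p == 0)%N = false -> (p < q)%N -> (q < k.+2)%N -> (p != k.+1)%N. Proof. lia. Qed.
Lemma nf13 p q : (p != 0)%N -> (q == 0)%N -> (q < p)%N. Proof. lia. Qed.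
Lemma nf14 p q : (p == 0)%N -> (p < q)%N -> (q == 0)%N -> False. Proof. lia. Qed.
Lemma nf15 k p q : k = 1%N -> (p < q)%N -> (q < k.+2)%N -> (p == 0)%N = false -> (q == k.+1)%N. Proof. lia. Qed.

Unset Implicit Arguments. Set Strict Implicit.

Theorem mainTheorem8 (R : realType) (k : nat) (c : nat -> R[i])
  (alpha beta : R) (x1 : R[i]) :
  0 < alpha -> 0 < beta -> (1 <= k)%N -> c k != 0 ->
  let A := Amat k c alpha beta x1 in
  let rho := Num.max alpha (Num.max beta (2 ^+ k.-1)) in
  [/\ jsr_is A rho,
      (forall z : R[i], eigenvalue (A false + A true) z <->
         (z = ((alpha + beta)%:C)%C \/ exists2 j : nat, (j <= k)%N & z = 2 ^+ j))
    & (Num.max alpha beta != 2 ^+ k.-1 -> simple_growth A rho)].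
Proof.
move=> a0 b0 k1 ck A rho.
set s : R := 2 ^+ k.-1.
have s1 : 1 <= s by apply: exprn_ege1; rewrite (ler_nat _ 1 2).
have km1 : (k - 1 = k.-1)%N by rewrite subn1.
have hut : forall r, ut (A r) by move=> r; exact: A_ut.
have rA : alpha <= rho by rewrite le_max lexx.
have rB : beta <= rho by rewrite !le_max lexx orbT.
have rS : s <= rho by rewrite !le_max lexx !orbT.
have r0 : 0 < rho by apply: lt_le_trans rA.
have dg : forall r p, cabs (A r p p) <= rho.
  move=> r p; case p0: (p == 0 :> nat).
    apply: le_trans (cabs_diag0_le c x1 r a0 b0 p0) _.
    by rewrite ge_max rA rB.
  apply: le_trans rS; rewrite /s -km1; apply: cabs_diag_le => //.
  by rewrite /= lt0n p0.
split.
-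
  apply: root_cvg => //.
    move=> m; apply: max_pow_le; last apply: max_pow_le.
    + apply: le_trans (supnorm_diag [ffun => true] ord0 hut).
      rewrite (eq_bigr (fun=> alpha)) ?prodr_const ?card_ord // => l _.
      by rewrite ffunE (cabs_diag0 c x1 _ a0 b0).
    + apply: le_trans (supnorm_diag [ffun => false] ord0 hut).
      rewrite (eq_bigr (fun=> beta)) ?prodr_const ?card_ord // => l _.
      by rewrite ffunE (cabs_diag0 c x1 _ a0 b0).
    + apply: le_trans (supnorm_diag [ffun => false] (@Ordinal k.+2 1 erefl) hut).
      rewrite (eq_bigr (fun=> s)) ?prodr_const ?card_ord // => l _.
      rewrite ffunE cabs_diag_mid //= ?km1 //; exact: nf1.
  move=> e e0.
  have [K hK] := @growth R k.+1 A predT (rho + e) 0 e 1 hut (lexx 0)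
    (addr_gt0 r0 e0) e0 ltr01 (fun r p hp => False_ind _ (negP hp isT))
    (fun r p _ => or_introl (lerD (dg r p) (lexx e))).
  by exists K => m; apply: supnorm_le.
-
  move=> z; set C := A false + A true.
  have E : eigenvalue C z = (\det (z%:M - C) == 0).
    apply/eigenvalueP/det0P=> [[v Av_av v_nz] | [v v_nz Av_av]]; exists v => //.
      by rewrite mulmxBr Av_av mul_mx_scalar subrr.
    by apply/eqP; rewrite -mul_mx_scalar eq_sym -subr_eq0 -mulmxBr Av_av.
  have T : is_trig_mx (z%:M - C)^T by apply: trig_aux.
  have Cd : forall p : 'I_k.+2, A false p p + A true p p =
     if (p == 0 :> nat) then ((alpha + beta)%:C)%C
     else if (p == k.+1 :> nat) then 1 else 2 ^+ (k - p).+1.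
    move=> p; rewrite !A_diag.
    case: ifP => _; first by rewrite addrC -rmorphD.
    case: ifP => _; first by rewrite addr0.
    by rewrite -natrD addnn -mul2n -expnS natrX.
  rewrite E -det_tr det_trig //.
  split.
    move/prodf_eq0 => [p _]; rewrite diag_aux subr_eq0 Cd => /eqP ->.
    case: ifP => p0; first by left.
    right; case: ifP => pk; first by exists 0%N.
    exists (k - p).+1 => //.
    by apply: nf2 => //; rewrite lt0n p0.
  move=> hz; apply/prodf_eq0.
  case: hz => [->|[j jk ->]].
    by exists ord0 => //; rewrite diag_aux Cd subrr.
  case: j jk => [|j] jk.
    exists ord_max => //; rewrite diag_aux Cd /= eqxx.
    by rewrite expr0 subrr.
  have hp : (k - j < k.+2)%N := nf3 k j.
  exists (Ordinal hp) => //; rewrite diag_aux Cd /=.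
  by rewrite (nf4 jk) nf5 (nf6 jk) subrr.
-
  move=> hne; set M := Num.max alpha beta.
  have aM : alpha <= M by rewrite le_max lexx.
  have bM : beta <= M by rewrite le_max lexx orbT.
  have dg0 : forall r (p : 'I_k.+2), (p == 0 :> nat) -> cabs (A r p p) <= M.
    by move=> r p p0; exact: (cabs_diag0_le c x1 r a0 b0 p0).
  have dgp : forall r (p : 'I_k.+2), (p != 0 :> nat) -> cabs (A r p p) <= s.
    move=> r p p0; rewrite /s -km1; apply: cabs_diag_le => //.
    by rewrite /= lt0n p0.
  move: hne; rewrite -/M neq_lt => /orP[hlt|hgt].
  +
    have rs : rho = s.
      have aS : alpha <= s by apply: ltW; apply: le_lt_trans aM hlt.
      have bS : beta <= s by apply: ltW; apply: le_lt_trans bM hlt.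
      by rewrite /rho (max_r bS) (max_r aS).
    rewrite rs.
    have dH0 : 0 < s - M by rewrite subr_gt0.
    case: (ltnP 1 k) => hk.
    * pose t : R := 2 ^+ (k - 2).
      have t0 : 0 < t by rewrite exprn_gt0.
      have st : s = t * 2 by rewrite /s /t -exprSr (nf7 hk).
      have th0 : 0 <= t + t / 2 by lra.
      have thl : t + t / 2 < s by rewrite st; lra.
      have dL0 : 0 < t / 2 by lra.
      refine ((fun G => _) (@growth R k.+1 A (fun p => (p <= 1)%N) s (t + t / 2) (s - M) (t / 2)
        hut th0 thl dH0 dL0 _ _)); last 2 first.
        move=> r p /= hp; split.
          suff : cabs (A r p p) <= t by lra.
          rewrite /t; apply: cabs_diag_le => //; exact: nf8.
        by move=> q hq; apply: hut; exact: nf9.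
      move=> r p /= hp; case p0: (p == 0 :> nat).
        by left; have := dg0 r p p0; lra.
      right; split; first by apply: dgp; rewrite p0.
      by move=> q pq hq; case: (nf10 p0 hp pq hq).
      by case: G => K hK; exists K => m f; exact: hK.
    * have k1' : k = 1%N := nf11 k1 hk.
      have sl : 0 < s by lra.
      refine ((fun G => _) (@growth R k.+1 A predT s 0 (s - M) 1
        hut (lexx 0) sl dH0 ltr01 (fun r p hp => False_ind _ (negP hp isT)) _)); last first.
      move=> r p _; case p0: (p == 0 :> nat).
        by left; have := dg0 r p p0; lra.
      right; split; first by apply: dgp; rewrite p0.
      move=> q pq _; apply: A_midlast; first by rewrite p0.
        exact: (nf12 p0 pq (ltn_ord q)).
      exact: (nf15 k1' pq (ltn_ord q) p0).
      by case: G => K hK; exists K => m f; exact: hK.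
  +
    have rM : rho = M.
      by rewrite /rho maxA max_l // ltW.
    rewrite rM.
    have M0 : 0 < M by apply: lt_le_trans aM.
    have th0 : 0 <= (s + M) / 2 by lra.
    have thl : (s + M) / 2 < M by lra.
    have dL0 : 0 < (M - s) / 2 by lra.
    refine ((fun G => _) (@growth R k.+1 A (fun p => (p == 0 :> nat)) M ((s + M) / 2) 1 ((M - s) / 2)
      hut th0 thl ltr01 dL0 _ _)); last 2 first.
      move=> r p /= hp; split.
        by have := dgp r p hp; lra.
      by move=> q hq; apply: hut; exact: nf13.
    move=> r p /= hp; right; split; first exact: dg0.
    by move=> q pq hq; case: (nf14 hp pq hq).
    by case: G => K hK; exists K => m f; exact: hK.
Qed.
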